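(* Let $A$ be an enriched matrix. If $A$ admits a suitable LR-ordering, then $A$ contains none of the following enriched matrices (all of whose rows are unlabeled and uncolored) as a subconfiguration: $M_0=\begin{pmatrix}1&0&1&1\\1&1&1&0\\0&1&1&1\end{pmatrix}$, $M_{II}(4)=\begin{pmatrix}0&1&1&1\\1&1&0&0\\0&1&1&0\\1&1&0&1\end{pmatrix}$, $M_V=\begin{pmatrix}1&1&0&0&0\\0&0&1&1&0\\1&1&1&1&0\\1&0&0&1&1\end{pmatrix}$, and $S_0(k)$ for any even $k\geq 4$, where $S_0(k)$ is the $(k+1)\times k$ $(0,1)$-matrix whose first row has a $1$ in every column, whose $(j+1)$-th row, for $j=1,\dots,k-1$, has $1$'s exactly in columns $j$ and $j+1$, and whose last row has $1$'s exactly in columns $1$ and $k$.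
   Context: Rows of a $(0,1)$-matrix are identified with the set of columns in which they have a $1$; a row is empty if it has no $1$. An enriched matrix is a $(0,1)$-matrix together with an assignment of labels and colors to some (possibly none) of its rows such that: each row is either unlabeled or labeled with one of L, R, LR (an LR-row, L-row, R-row is a row labeled LR, L, R respectively); each row is either uncolored or colored red or blue; the only rows that may be colored are those labeled L or R and the empty LR-rows; and all empty LR-rows are colored with the same color. A row is a non-LR-row if it is not an LR-row. An LR-ordering of an enriched matrix $A$ is a linear ordering $\Pi$ of its columns such that: (1) in $\Pi$ the $1$'s of every non-LR-row appear consecutively; (2) the $1$'s of every nonempty L-row start in the first column of $\Pi$, and the $1$'s of every nonempty R-row end in the last column of $\Pi$; (3) in $\Pi$ the $1$'s of the complement of every LR-row (obtained by interchanging $0$'s and $1$'s) appear consecutively. Blocks with respect to an LR-ordering $\Pi$: for each row labeled L or LR having a $1$ in the first column of $\Pi$, its L-block is the maximal set of consecutive columns of $\Pi$, starting in the first column, on which the row has a $1$; R-blocks are defined analogously for rows labeled R or LR having a $1$ in the last column of $\Pi$ (maximal set of consecutive columns ending in the last column on which the row has a $1$); for each unlabeled row, its U-block is the set of columns in which it has a $1$. An LR-ordering is suitable if: the L-blocks of those LR-rows with exactly two blocks are disjoint from every R-block; the R-blocks of those LR-rows with exactly two blocks are disjoint from every L-block; and for each LR-row and each U-block, the U-block has empty intersection with either the L-block or the R-block of that LR-row. For enriched matrices $A$ and $B$, $B$ is a subconfiguration of $A$ if $B$ equals some submatrix of $A$ up to permutations of rows and/or columns, with the labels and colors of the rows remaining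 the same. *)

(* Defs.v *)
From mathcomp Require Import all_boot all_order all_algebra all_fingroup.
Set Implicit Arguments. Unset Strict Implicit. Unset Printing Implicit Defensive.

Inductive label := Lab_L | Lab_R | Lab_LR.
Inductive color := Red | Blue.

Record enr (m n : nat) := Enr {
  ent : 'M[bool]_(m, n);
  lab : 'I_m -> option label;   (* None = unlabeled *)
  col : 'I_m -> option color    (* None = uncolored *)
}.

Section Enriched.
Variables (m n : nat) (A : enr m n).

Definition row_empty (r : 'I_m) : Prop := forall j : 'I_n, ent A r j = false.

Definition enriched : Prop :=
  (forall r, col A r <> None ->
     lab A r = Some Lab_L \/ lab A r = Some Lab_R \/
     (lab A r = Some Lab_LR /\ row_empty r)) /\
  (exists c : color, forall r, lab A r = Some Lab_LR -> row_empty r ->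
     col A r = Some c).

(* A linear ordering of the columns: position p holds column s p. *)
Variable s : {perm 'I_n}.

Definition rowpos (r : 'I_m) (p : 'I_n) : bool := ent A r (s p).

Definition consec (f : 'I_n -> bool) : Prop :=
  forall p1 p2 p3 : 'I_n, p1 <= p2 -> p2 <= p3 -> f p1 -> f p3 -> f p2.

Definition at_first (f : 'I_n -> bool) : Prop :=
  exists p : 'I_n, val p = 0 /\ f p.
Definition at_last (f : 'I_n -> bool) : Prop :=
  exists p : 'I_n, val p = n.-1 /\ f p.

Definition LR_ordering : Prop :=
  (forall r, lab A r <> Some Lab_LR -> consec (rowpos r)) /\
  (forall r, lab A r = Some Lab_L -> ~ row_empty r -> at_first (rowpos r)) /\
  (forall r, lab A r = Some Lab_R -> ~ row_empty r -> at_last (rowpos r)) /\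
  (forall r, lab A r = Some Lab_LR -> consec (fun p => ~~ rowpos r p)).

(* blocks, as sets of positions; they are empty exactly when the row has a
   0 in the first (resp. last) position, i.e. when the block is undefined *)
Definition Lblock (r : 'I_m) (p : 'I_n) : bool :=
  [forall q : 'I_n, (q <= p) ==> rowpos r q].
Definition Rblock (r : 'I_m) (p : 'I_n) : bool :=
  [forall q : 'I_n, (p <= q) ==> rowpos r q].
Definition Ublock (r : 'I_m) (p : 'I_n) : bool := rowpos r p.

Definition disj (X Y : 'I_n -> bool) : Prop := forall p, ~~ (X p && Y p).

Definition has_L_or_LR (r : 'I_m) : Prop :=
  lab A r = Some Lab_L \/ lab A r = Some Lab_LR.
Definition has_R_or_LR (r : 'I_m) : Prop :=
  lab A r = Some Lab_R \/ lab A r = Some Lab_LR.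

(* an LR-row with exactly two blocks: it has an L-block and an R-block,
   and these are distinct (equivalently disjoint) *)
Definition two_blocks (r : 'I_m) : Prop :=
  lab A r = Some Lab_LR /\ at_first (rowpos r) /\ at_last (rowpos r) /\
  disj (Lblock r) (Rblock r).

Definition suitable : Prop :=
  LR_ordering /\
  (forall r r', two_blocks r -> has_R_or_LR r' -> disj (Lblock r) (Rblock r')) /\
  (forall r r', two_blocks r -> has_L_or_LR r' -> disj (Rblock r) (Lblock r')) /\
  (forall r u, lab A r = Some Lab_LR -> lab A u = None ->
     disj (Ublock u) (Lblock r) \/ disj (Ublock u) (Rblock r)).

End Enriched.

Definition subconf (p q m n : nat) (B : enr p q) (A : enr m n) : Prop :=
  exists (f : 'I_p -> 'I_m) (g : 'I_q -> 'I_n),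
    injective f /\ injective g /\
    (forall i j, ent B i j = ent A (f i) (g j)) /\
    (forall i, lab B i = lab A (f i)) /\
    (forall i, col B i = col A (f i)).

Definition mx_of (m n : nat) (l : seq (seq nat)) : 'M[bool]_(m, n) :=
  \matrix_(i < m, j < n) (nth 0 (nth [::] l i) j == 1).

Definition plain (m n : nat) (M : 'M[bool]_(m, n)) : enr m n :=
  Enr M (fun _ => None) (fun _ => None).

Definition M0 : enr 3 4 := plain (mx_of 3 4
  [:: [:: 1; 0; 1; 1]; [:: 1; 1; 1; 0]; [:: 0; 1; 1; 1]]).

Definition MII4 : enr 4 4 := plain (mx_of 4 4
  [:: [:: 0; 1; 1; 1]; [:: 1; 1; 0; 0]; [:: 0; 1; 1; 0]; [:: 1; 1; 0; 1]]).

Definition MV : enr 4 5 := plain (mx_of 4 5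
  [:: [:: 1; 1; 0; 0; 0]; [:: 0; 0; 1; 1; 0]; [:: 1; 1; 1; 1; 0];
      [:: 1; 0; 0; 1; 1]]).

(* S_0(k), with 0-indexed rows 0..k and columns 0..k-1 *)
Definition S0 (k : nat) : enr k.+1 k := plain (\matrix_(i < k.+1, j < k)
  if i == 0 :> nat then true
  else if i == k :> nat then (j == 0 :> nat) || (j == k.-1 :> nat)
  else (j == i.-1 :> nat) || (j == i :> nat)).

(* Main.v *)
Require Import Defs.
From mathcomp Require Import all_boot all_order all_algebra all_fingroup.
From mathcomp Require Import zify.
Set Implicit Arguments. Unset Strict Implicit. Unset Printing Implicit Defensive.

Definition okl p q (B : nat -> nat -> bool) (l : seq nat) : bool :=
  all (fun i => all (fun j1 => all (fun j2 => all (fun j3 =>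
    ((index j1 l < index j2 l) && (index j2 l < index j3 l)) ==> B i j1 ==> B i j3 ==> B i j2)
   (iota 0 q)) (iota 0 q)) (iota 0 q)) (iota 0 p).
Definition noc1p p q (B : nat -> nat -> bool) : bool :=
  all (fun l => ~~ okl p q B l) (permutations (iota 0 q)).

Definition C1 p q (B : 'I_p -> 'I_q -> bool) (pos : 'I_q -> nat) : Prop :=
  forall i j1 j2 j3, pos j1 <= pos j2 -> pos j2 <= pos j3 -> B i j1 -> B i j3 -> B i j2.

Lemma noc1p_sound p q (B : 'I_p -> 'I_q -> bool) (Bn : nat -> nat -> bool) :
  (forall i j, B i j = Bn i j) -> noc1p p q Bn ->
  forall pos, ~ C1 B pos.
Proof.
move=> HB Hn pos H.
set lo := sort (fun a b => pos a <= pos b) (enum 'I_q).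
have Hlo : perm_eq lo (enum 'I_q) by rewrite /lo perm_sort.
have Hperm : map val lo \in permutations (iota 0 q).
  by rewrite mem_permutations -val_enum_ord perm_map.
have key : forall a b, index a lo < index b lo -> pos a <= pos b.
  move=> a b.
  have srt : sorted (fun a b => pos a <= pos b) lo.
    by apply: sort_sorted => x y; apply: leq_total.
  apply: (sorted_ltn_index _ srt).
  - by move=> x y z h1 h2; apply: leq_trans h1 h2.
  - by rewrite (perm_mem Hlo) mem_enum.
  - by rewrite (perm_mem Hlo) mem_enum.
move/allP: Hn => /(_ _ Hperm) /negP; apply.
apply/allP => i; rewrite mem_iota add0n => /= ip.
apply/allP => j1; rewrite mem_iota add0n => /= j1q.
apply/allP => j2; rewrite mem_iota add0n => /= j2q.
apply/allP => j3; rewrite mem_iota add0n => /= j3q.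
apply/implyP => /andP[h12 h23]; apply/implyP => b1; apply/implyP => b3.
move: h12 h23 b1 b3.
have -> : j1 = val (Ordinal j1q) by [].
have -> : j2 = val (Ordinal j2q) by [].
have -> : j3 = val (Ordinal j3q) by [].
have -> : i = val (Ordinal ip) by [].
rewrite !(index_map val_inj) -!HB => h12 h23 b1 b3.
exact: (H _ _ _ _ (key _ _ h12) (key _ _ h23) b1 b3).
Qed.

Lemma nomin p q (B : 'I_p -> 'I_q -> bool) pos (c0 : 'I_q) :
  C1 B pos ->
  (forall c, exists x y r1 r2,
     [&& B r1 c, B r1 x, ~~ B r1 y, B r2 c, B r2 y & ~~ B r2 x]) -> False.
Proof.
move=> H Hc.
case: (arg_minnP pos (P := xpredT) (i0 := c0)) => // c _ Hmin.
have [x [y [r1 [r2 /and5P [h1 h2 h3 h4 /andP [h5 h6]]]]]] := Hc c.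
case: (leqP (pos x) (pos y)) => hxy.
  by move: (H r2 c x y (Hmin x isT) hxy h4 h5); rewrite (negbTE h6).
by move: (H r1 c y x (Hmin y isT) (ltnW hxy) h1 h2); rewrite (negbTE h3).
Qed.

Lemma c1p_of_sub m n p q (A : enr m n) (B : enr p q) (s : {perm 'I_n}) :
  LR_ordering A s -> subconf B A -> (forall i, lab B i = None) ->
  exists pos, C1 (ent B) pos.
Proof.
move=> [HLR _] [f [g [fi [gi [He [Hl Hc]]]]]] Hn.
exists (fun j => val ((s^-1)%g (g j))).
move=> i j1 j2 j3 h12 h23.
have Hr : lab A (f i) <> Some Lab_LR by rewrite -Hl Hn.
have := HLR _ Hr _ _ _ h12 h23.
by rewrite /rowpos !permKV !He.
Qed.

Definition S0n (k : nat) (i j : nat) : bool :=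
  (i == 0) || ((i == k) && ((j == 0) || (j == k.-1))) ||
  ((i != 0) && (i != k) && ((j == i.-1) || (j == i))).

Lemma S0E k i j : ent (S0 k) i j = S0n k i j.
Proof.
rewrite /S0 /= mxE /S0n.
case: eqP => //= _; case: eqP => //= _; by rewrite ?orbF.
Qed.

Lemma S0_crit k : 4 <= k -> forall c : 'I_k, exists x y (r1 r2 : 'I_k.+1),
  [&& ent (S0 k) r1 c, ent (S0 k) r1 x, ~~ ent (S0 k) r1 y, ent (S0 k) r2 c,
      ent (S0 k) r2 y & ~~ ent (S0 k) r2 x].
Proof.
move=> k4 c; have cl := ltn_ord c.
case: (eqVneq (val c) 0) => [c0|cn0].
  have h1 : 1 < k by lia. have h2 : k.-1 < k by lia.
  have h3 : 1 < k.+1 by lia. have h4 : k < k.+1 by lia.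
  exists (Ordinal h1), (Ordinal h2), (Ordinal h3), (Ordinal h4).
  rewrite !S0E /S0n /= c0; lia.
case: (eqVneq (val c) k.-1) => [ck|ckn].
  have h1 : k - 2 < k by lia. have h2 : 0 < k by lia.
  have h3 : k.-1 < k.+1 by lia. have h4 : k < k.+1 by lia.
  exists (Ordinal h1), (Ordinal h2), (Ordinal h3), (Ordinal h4).
  rewrite !S0E /S0n /= ck; lia.
have cn0' : nat_of_ord c != 0 by [].
have ckn' : nat_of_ord c != k.-1 by [].
have h1 : c.-1 < k by lia. have h2 : c.+1 < k by lia.
have h3 : c < k.+1 by lia. have h4 : c.+1 < k.+1 by lia.
exists (Ordinal h1), (Ordinal h2), (Ordinal h3), (Ordinal h4).
rewrite !S0E /S0n /=; lia.
Qed.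

Theorem mainTheorem2 (m n : nat) (A : enr m n) :
  enriched A ->
  (exists s : {perm 'I_n}, suitable A s) ->
  ~ subconf M0 A /\ ~ subconf MII4 A /\ ~ subconf MV A /\
  (forall k : nat, 4 <= k -> ~~ odd k -> ~ subconf (S0 k) A).
Proof.
move=> _ [s [HLR _]].
split; [|split; [|split]].
- move=> Hs; have [pos Hp] := c1p_of_sub HLR Hs (fun _ => erefl).
  apply: (noc1p_sound (Bn := fun i j => nth 0 (nth [::]
    [:: [:: 1; 0; 1; 1]; [:: 1; 1; 1; 0]; [:: 0; 1; 1; 1]] i) j == 1) _ _ Hp).
  + by move=> i j; rewrite /M0 /= mxE.
  + by vm_compute.
- move=> Hs; have [pos Hp] := c1p_of_sub HLR Hs (fun _ => erefl).
  apply: (noc1p_sound (Bn := fun i j => nth 0 (nth [::]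
    [:: [:: 0; 1; 1; 1]; [:: 1; 1; 0; 0]; [:: 0; 1; 1; 0]; [:: 1; 1; 0; 1]] i) j == 1) _ _ Hp).
  + by move=> i j; rewrite /MII4 /= mxE.
  + by vm_compute.
- move=> Hs; have [pos Hp] := c1p_of_sub HLR Hs (fun _ => erefl).
  apply: (noc1p_sound (Bn := fun i j => nth 0 (nth [::]
    [:: [:: 1; 1; 0; 0; 0]; [:: 0; 0; 1; 1; 0]; [:: 1; 1; 1; 1; 0];
      [:: 1; 0; 0; 1; 1]] i) j == 1) _ _ Hp).
  + by move=> i j; rewrite /MV /= mxE.
  + by vm_compute.
- move=> k k4 _ Hs; have [pos Hp] := c1p_of_sub HLR Hs (fun _ => erefl).
  have k0 : 0 < k by lia.
  exact: (nomin (Ordinal k0) Hp (S0_crit k4)).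
Qed.
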